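(* Let $(X,\mathcal F)$ be a measurable space, $Y=[0,1]$ or $Y=[0,\infty]$, and $\mu\colon\mathcal F\to Y$ a monotone measure. Let $\circ,\star,\Box\colon Y\times Y\to Y$ be non-decreasing operators, let $\circledcirc\colon Y\times Y\to Y$ be a non-decreasing and left-continuous operator, and let $\triangle\colon Y\times Y\to Y$ be an arbitrary operator. Assume that for all $a,b,c,d\in Y$ and all $t\ge 1$, $$a^t\circ b\ge (a\circ b)^t,\qquad (a\,\Box\, b)\circ(c\,\triangle\, d)\ge (a\circ c)\circledcirc(b\circ d).$$ Let $p,q\ge 1$, $r,s>0$, let $A,B\in\mathcal F$ and let $f,g,h\colon X\to Y$ be measurable functions such that the pairs $f|_A, g|_B$ and $f|_A, h|_B$ are each positively dependent with respect to $\mu$ and $\triangle$. Then $$\Big(\Big(\int_A f\circ\mu\Big)\circledcirc\Big(\int_B g\circ\mu\Big)\Big)^r\star\Big(\Big(\int_A f\circ\mu\Big)\circledcirc\Big(\int_B h\circ\mu\Big)\Big)^s\le\Big(\int_{A\cap B}(f\,\Box\, g)^p\circ\mu\Big)^{r/p}\star\Big(\int_{A\cap B}(f\,\Box\, h)^q\circ\mu\Big)^{s/q}.$$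
   Context: A monotone measure is a map $\mu\colon\mathcal F\to Y$ with $\mu(\emptyset)=0$, $\mu(X)>0$ and $\mu(A)\le\mu(B)$ whenever $A\subset B$. An operator $\circ\colon Y\times Y\to Y$ is non-decreasing if $a\circ c\ge b\circ d$ whenever $a\ge b$ and $c\ge d$; it is left-continuous if $\lim_n (x_n\circ y_n)=x\circ y$ whenever $x_n\nearrow x$, $y_n\nearrow y$ (strictly increasing sequences converging to $x$, $y$). For a measurable $h\colon X\to Y$, $A\in\mathcal F$ and a non-decreasing operator $\circ$, the generalized Sugeno integral is $\int_A h\circ\mu=\sup_{\alpha\in Y}\{\alpha\circ\mu(A\cap\{h\ge\alpha\})\}$, where $\{h\ge\alpha\}=\{x\in X: h(x)\ge\alpha\}$. For $C\subset X$, $h|_C$ denotes the restriction and $\{h|_C\ge a\}=C\cap\{h\ge a\}$. Functions $f|_A$ and $g|_B$ are positively dependent with respect to $\mu$ and an operator $\triangle$ if for all $a,b\in Y$: $\mu(\{f|_A\ge a\}\cap\{g|_B\ge b\})\ge\mu(\{f|_A\ge a\})\,\triangle\,\mu(\{g|_B\ge b\})$. *)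

(* Defs.v *)
From Stdlib Require Import Reals ClassicalEpsilon.
Open Scope R_scope.

Inductive ereal : Type := Fin (x : R) | PInf.

Definition ele (x y : ereal) : Prop :=
  match x, y with
  | Fin a, Fin b => a <= b
  | _, PInf => True
  | PInf, Fin _ => False
  end.

Definition elt (x y : ereal) : Prop := ele x y /\ x <> y.

(* Y = [0, top], where top = 1 (Y = [0,1]) or top = +oo (Y = [0,oo]). *)
Definition inY (top : ereal) (x : ereal) : Prop := ele (Fin 0) x /\ ele x top.

(* power x^t (only used for x >= 0 and t > 0); 0^t = 0, oo^t = oo for t > 0 *)
Definition epow (x : ereal) (t : R) : ereal :=
  match x with
  | Fin a => if Rle_dec a 0 then (if Rlt_dec 0 t then Fin 0 else Fin 1)
             else Fin (Rpower a t)
  | PInf => if Rlt_dec 0 t then PInf else if Req_EM_T t 0 then Fin 1 else Fin 0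
  end.

Definition is_esup (S : ereal -> Prop) (l : ereal) : Prop :=
  (forall v, S v -> ele v l) /\ (forall u, (forall v, S v -> ele v u) -> ele l u).

Definition esup (S : ereal -> Prop) : ereal :=
  epsilon (inhabits PInf) (is_esup S).

Definition ecv (u : nat -> ereal) (l : ereal) : Prop :=
  match l with
  | Fin a => forall eps, eps > 0 -> exists N, forall n, (n >= N)%nat ->
               exists b, u n = Fin b /\ Rabs (b - a) < eps
  | PInf => forall M, exists N, forall n, (n >= N)%nat -> elt (Fin M) (u n)
  end.

Definition sigma_algebra {X : Type} (F : (X -> Prop) -> Prop) : Prop :=
  F (fun _ => False) /\
  (forall A, F A -> F (fun x => ~ A x)) /\
  (forall An : nat -> X -> Prop, (forall n, F (An n)) -> F (fun x => exists n, An n x)).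

Definition monotone_measure {X : Type} (top : ereal) (F : (X -> Prop) -> Prop)
  (mu : (X -> Prop) -> ereal) : Prop :=
  (forall A, F A -> inY top (mu A)) /\
  mu (fun _ => False) = Fin 0 /\
  elt (Fin 0) (mu (fun _ => True)) /\
  (forall A B, F A -> F B -> (forall x, A x -> B x) -> ele (mu A) (mu B)).

(* measurable Y-valued function (Borel sigma-algebra on Y is generated by
   the sets [alpha, top]) *)
Definition measurable_fun {X : Type} (top : ereal) (F : (X -> Prop) -> Prop)
  (h : X -> ereal) : Prop :=
  (forall x, inY top (h x)) /\ (forall a, inY top a -> F (fun x => ele a (h x))).

Definition binop_on (top : ereal) (op : ereal -> ereal -> ereal) : Prop :=
  forall a b, inY top a -> inY top b -> inY top (op a b).

Definition nondecreasing_op (top : ereal) (op : ereal -> ereal -> ereal) : Prop :=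
  forall a b c d, inY top a -> inY top b -> inY top c -> inY top d ->
    ele b a -> ele d c -> ele (op b d) (op a c).

Definition strictly_increasing_to (top : ereal) (u : nat -> ereal) (l : ereal) : Prop :=
  (forall n, inY top (u n)) /\ (forall n, elt (u n) (u (S n))) /\ ecv u l.

Definition left_continuous_op (top : ereal) (op : ereal -> ereal -> ereal) : Prop :=
  forall (x y : ereal) (xn yn : nat -> ereal), inY top x -> inY top y ->
    strictly_increasing_to top xn x -> strictly_increasing_to top yn y ->
    ecv (fun n => op (xn n) (yn n)) (op x y).

Definition sugeno {X : Type} (top : ereal) (op : ereal -> ereal -> ereal)
  (mu : (X -> Prop) -> ereal) (A : X -> Prop) (h : X -> ereal) : ereal :=
  esup (fun v => exists a, inY top a /\ v = op a (mu (fun x => A x /\ ele a (h x)))).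

Definition pos_dependent {X : Type} (top : ereal) (mu : (X -> Prop) -> ereal)
  (tri : ereal -> ereal -> ereal) (f : X -> ereal) (A : X -> Prop)
  (g : X -> ereal) (B : X -> Prop) : Prop :=
  forall a b, inY top a -> inY top b ->
    ele (tri (mu (fun x => A x /\ ele a (f x))) (mu (fun x => B x /\ ele b (g x))))
        (mu (fun x => (A x /\ ele a (f x)) /\ (B x /\ ele b (g x)))).

(* Main.v *)
Require Import Defs.
From Stdlib Require Import Reals Lra Lia ZArith ClassicalEpsilon Classical FunctionalExtensionality PropExtensionality.
Open Scope R_scope.

Lemma ele_refl x : ele x x.
Proof. destruct x; simpl; auto; lra. Qed.

Lemma ele_trans x y z : ele x y -> ele y z -> ele x z.
Proof. destruct x, y, z; simpl; intros; auto; try lra; contradiction. Qed.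

Lemma ele_total x y : ele x y \/ ele y x.
Proof. destruct x, y; simpl; auto. lra. Qed.

Lemma ele_antisym x y : ele x y -> ele y x -> x = y.
Proof. destruct x, y; simpl; intros; try contradiction; auto. f_equal; lra. Qed.

Lemma esup_exists (S : ereal -> Prop) : (exists v, S v) -> exists l, is_esup S l.
Proof.
  intros [v0 Hv0].
  destruct (classic (exists M, forall v, S v -> ele v (Fin M))) as [[M HM]|HN].
  - set (E := fun x => S (Fin x)).
    assert (HB : bound E). { exists M. intros x Hx. apply (HM _ Hx). }
    assert (HE : exists x, E x).
    { destruct v0 as [x0|]. exists x0; exact Hv0. specialize (HM _ Hv0). contradiction. }
    destruct (completeness E HB HE) as [m [Hm1 Hm2]].
    exists (Fin m). split.
    + intros v Hv. destruct v as [x|]. simpl. apply Hm1. exact Hv.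
      specialize (HM _ Hv). contradiction.
    + intros u Hu. destruct u as [c|]; simpl; auto.
      apply Hm2. intros x Hx. apply (Hu _ Hx).
  - exists PInf. split.
    + intros; destruct v; simpl; auto.
    + intros u Hu. destruct u as [c|]; simpl; auto. apply HN. exists c. exact Hu.
Qed.

Lemma esup_spec (S : ereal -> Prop) : (exists v, S v) -> is_esup S (esup S).
Proof.
  intro H. unfold esup. apply epsilon_spec. apply esup_exists. exact H.
Qed.

Lemma esup_ub S v : S v -> ele v (esup S).
Proof. intro H. apply (proj1 (esup_spec S (ex_intro _ v H))). exact H. Qed.

Lemma esup_least S u : (exists v, S v) -> (forall v, S v -> ele v u) -> ele (esup S) u.
Proof. intros H1 H2. apply (proj2 (esup_spec S H1)). exact H2. Qed.

Lemma esup_approx S x : (exists v, S v) -> elt x (esup S) -> exists v, S v /\ ele x v.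
Proof.
  intros H1 [H2 H3]. apply NNPP. intro HN.
  assert (ele (esup S) x).
  { apply esup_least; auto. intros v Hv. destruct (ele_total x v); auto.
    exfalso; apply HN; eauto. }
  apply H3. apply ele_antisym; auto.
Qed.

Lemma Rpower1_l t : Rpower 1 t = 1.
Proof. unfold Rpower. rewrite ln_1, Rmult_0_r, exp_0. reflexivity. Qed.

Lemma epow_Fin_pos a t : 0 < t -> epow (Fin a) t = if Rle_dec a 0 then Fin 0 else Fin (Rpower a t).
Proof. intro Ht. simpl. destruct (Rle_dec a 0); auto. destruct (Rlt_dec 0 t); auto; lra. Qed.

Lemma epow_PInf t : 0 < t -> epow PInf t = PInf.
Proof. intro Ht. simpl. destruct (Rlt_dec 0 t); auto; lra. Qed.

Lemma epow_ge0 x t : 0 < t -> ele (Fin 0) (epow x t).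
Proof.
  intro Ht. destruct x as [a|].
  - rewrite epow_Fin_pos by auto. destruct (Rle_dec a 0); simpl. lra. unfold Rpower. left; apply exp_pos.
  - rewrite epow_PInf by auto. simpl; auto.
Qed.

Lemma epow_mono x y t : 0 < t -> ele (Fin 0) x -> ele x y -> ele (epow x t) (epow y t).
Proof.
  intros Ht H0 Hxy. destruct x as [a|], y as [b|]; simpl in H0, Hxy; try contradiction.
  - rewrite !epow_Fin_pos by auto. destruct (Rle_dec a 0), (Rle_dec b 0); simpl; try lra.
    + unfold Rpower; left; apply exp_pos.
    + apply Rle_Rpower_l; lra.
  - rewrite epow_PInf by auto. destruct (epow (Fin a) t); simpl; auto.
  - rewrite epow_PInf by auto. simpl; auto.
Qed.

Lemma epow_1 x : ele (Fin 0) x -> epow x 1 = x.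
Proof.
  intro H0. destruct x as [a|].
  - rewrite epow_Fin_pos by lra. simpl in H0. destruct (Rle_dec a 0).
    + f_equal; lra.
    + rewrite Rpower_1; auto; lra.
  - apply epow_PInf; lra.
Qed.

Lemma epow_epow x a b : 0 < a -> 0 < b -> epow (epow x a) b = epow x (a * b).
Proof.
  intros Ha Hb. assert (0 < a * b) by (apply Rmult_lt_0_compat; auto).
  destruct x as [c|].
  - rewrite !epow_Fin_pos by auto. destruct (Rle_dec c 0).
    + rewrite epow_Fin_pos by auto. destruct (Rle_dec 0 0); auto; lra.
    + rewrite epow_Fin_pos by auto. destruct (Rle_dec (Rpower c a) 0) as [r|r].
      * exfalso. unfold Rpower in r. pose proof (exp_pos (a * ln c)). lra.
      * rewrite Rpower_mult. auto.
  - rewrite !epow_PInf; auto.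
Qed.

Lemma epow_inY top x t : (top = Fin 1 \/ top = PInf) -> 0 < t -> inY top x -> inY top (epow x t).
Proof.
  intros Htop Ht [H0 H1]. split. apply epow_ge0; auto.
  destruct Htop as [->| ->]; [|destruct (epow x t); simpl; auto].
  apply ele_trans with (epow (Fin 1) t). apply epow_mono; auto.
  rewrite epow_Fin_pos by auto. destruct (Rle_dec 1 0). lra. rewrite Rpower1_l. simpl; lra.
Qed.

Lemma inY_top top : (top = Fin 1 \/ top = PInf) -> inY top top.
Proof. intros [-> | ->]; split; simpl; auto; lra. Qed.

Lemma inY_0 top : (top = Fin 1 \/ top = PInf) -> inY top (Fin 0).
Proof. intros [-> | ->]; split; simpl; auto; lra. Qed.

Lemma F_inter {X} (F : (X -> Prop) -> Prop) A B : sigma_algebra F -> F A -> F B -> F (fun x => A x /\ B x).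
Proof.
  intros [H0 [Hc Hu]] HA HB.
  assert (E : (fun x => A x /\ B x) = (fun x => ~ (exists n:nat, (fun n x => match n with O => ~ A x | S _ => ~ B x end) n x))).
  { apply functional_extensionality; intro x; apply propositional_extensionality; split.
    - intros [Ha Hb] [[|n] Hn]; auto.
    - intro H; split; apply NNPP; intro H'; apply H; [exists O | exists 1%nat]; auto. }
  rewrite E. apply Hc. apply Hu. intros [|n]; apply Hc; auto.
Qed.

Lemma ecv_le u l T : ecv u l -> (forall n, ele (u n) T) -> ele l T.
Proof.
  intros Hc Hu. destruct l as [a|], T as [c|]; simpl; auto.
  - destruct (Rle_dec a c) as [|Hn]; auto. exfalso.
    destruct (Hc (a - c)) as [N HN]. lra.
    destruct (HN N) as [b [Hb Hb2]]. lia.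
    specialize (Hu N). rewrite Hb in Hu. simpl in Hu.
    apply Rabs_def2 in Hb2. lra.
  - destruct (Hc c) as [N HN]. destruct (HN N) as [H1 H2]. lia.
    apply H2. apply ele_antisym; auto.
Qed.

Lemma approx_seq top Xv : (top = Fin 1 \/ top = PInf) -> inY top Xv -> elt (Fin 0) Xv ->
  exists u, strictly_increasing_to top u Xv /\ forall n, elt (u n) Xv.
Proof.
  intros Htop [HX0 HX1] [HXp HXn]. destruct Xv as [x|].
  - simpl in HX0. assert (Hx : 0 < x). { destruct HX0; auto. subst; congruence. }
    assert (Hpos : forall n, 0 < INR n + 2). { intro n; pose proof (pos_INR n); lra. }
    exists (fun n => Fin (x - x / (INR n + 2))).
    assert (Hlt : forall n, x - x / (INR n + 2) < x).
    { intro n. assert (0 < x / (INR n + 2)) by (apply Rdiv_lt_0_compat; auto). lra. }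
    assert (Hge : forall n, 0 <= x - x / (INR n + 2)).
    { intro n. assert (x / (INR n + 2) <= x).
      { unfold Rdiv. rewrite <- (Rmult_1_r x) at 2. apply Rmult_le_compat_l. lra.
        rewrite <- Rinv_1. apply Rinv_le_contravar; pose proof (pos_INR n); lra. }
      lra. }
    split; [split; [|split]|].
    + intro n. split. simpl. apply Hge. apply ele_trans with (Fin x); auto. simpl. left; apply Hlt.
    + intro n. split.
      * unfold ele. rewrite S_INR.
        assert (x / (INR n + 1 + 2) <= x / (INR n + 2)).
        { unfold Rdiv. apply Rmult_le_compat_l. lra. apply Rinv_le_contravar. apply Hpos. lra. }
        lra.
      * intro E. assert (E' : x - x / (INR n + 2) = x - x / (INR (S n) + 2)) by congruence. rewrite S_INR in E'.
        assert (x / (INR n + 1 + 2) < x / (INR n + 2)).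
        { unfold Rdiv. apply Rmult_lt_compat_l. lra. apply Rinv_lt_contravar.
          apply Rmult_lt_0_compat; auto. pose proof (pos_INR n); lra. lra. }
        lra.
    + simpl. intros eps Heps.
      destruct (archimed (x / eps)) as [Ha _].
      destruct (Z.le_gt_cases (up (x/eps)) 0) as [Hz|Hz].
      * exists O. intros n _. eexists; split; [reflexivity|].
        assert (x / eps <= 0). { apply IZR_le in Hz. lra. }
        exfalso. assert (0 < x / eps) by (apply Rdiv_lt_0_compat; auto). lra.
      * exists (Z.to_nat (up (x / eps))). intros n Hn. eexists; split; [reflexivity|].
        replace (x - x / (INR n + 2) - x) with (- (x / (INR n + 2))) by ring.
        rewrite Rabs_Ropp. rewrite Rabs_right.
        2:{ left; apply Rdiv_lt_0_compat; auto. }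
        assert (HN : x / eps < INR n + 2).
        { apply le_INR in Hn. rewrite INR_IZR_INZ in Hn. rewrite Z2Nat.id in Hn by lia. lra. }
        apply Rmult_lt_reg_r with (INR n + 2). apply Hpos.
        unfold Rdiv. rewrite Rmult_assoc, Rinv_l. 2:{ specialize (Hpos n); lra. }
        apply Rmult_lt_reg_r with (/ eps). apply Rinv_0_lt_compat; auto.
        rewrite Rmult_1_r. replace (eps * (INR n + 2) * / eps) with (INR n + 2) by (field; lra).
        exact HN.
    + intro n. split. simpl. left; apply Hlt. intro E; injection E; specialize (Hlt n); lra.
  - assert (top = PInf). { destruct Htop as [ -> | -> ]; simpl in HX1; auto. contradiction. }
    subst top. exists (fun n => Fin (INR n)). split; [split; [|split]|].
    + intro n; split; simpl; auto. apply pos_INR.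
    + intro n; split. unfold ele. rewrite S_INR; lra. intro E. assert (E' : INR n = INR (S n)) by congruence. rewrite S_INR in E'; lra.
    + simpl. intro M. destruct (archimed M) as [Ha _].
      exists (Z.to_nat (Z.max 0 (up M))). intros n Hn. split. simpl.
      apply le_INR in Hn. rewrite INR_IZR_INZ in Hn. rewrite Z2Nat.id in Hn by lia.
      assert (IZR (up M) <= IZR (Z.max 0 (up M))) by (apply IZR_le; lia). lra.
      intro E. assert (E' : M = INR n) by congruence.
      apply le_INR in Hn. rewrite INR_IZR_INZ in Hn. rewrite Z2Nat.id in Hn by lia.
      assert (IZR (up M) <= IZR (Z.max 0 (up M))) by (apply IZR_le; lia). lra.
    + intro n; split; simpl; auto. congruence.
Qed.


Lemma sug_ub {X} top (circ : ereal -> ereal -> ereal) (mu : (X -> Prop) -> ereal) D h a : inY top a ->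
  ele (circ a (mu (fun x => D x /\ ele a (h x)))) (sugeno top circ mu D h).
Proof. intro Ha. unfold sugeno. apply esup_ub. exists a; auto. Qed.

Lemma sug_ne {X} top (circ : ereal -> ereal -> ereal) (mu : (X -> Prop) -> ereal) D h : (top = Fin 1 \/ top = PInf) ->
  exists v, (fun v => exists a, inY top a /\ v = circ a (mu (fun x => D x /\ ele a (h x)))) v.
Proof. intro Htop. eexists. exists (Fin 0). split. apply inY_0; auto. reflexivity. Qed.

Lemma sug_least {X} top (circ : ereal -> ereal -> ereal) (mu : (X -> Prop) -> ereal) D h u : (top = Fin 1 \/ top = PInf) ->
  (forall a, inY top a -> ele (circ a (mu (fun x => D x /\ ele a (h x)))) u) ->
  ele (sugeno top circ mu D h) u.
Proof.
  intros Htop H. unfold sugeno. apply esup_least. apply sug_ne; auto.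
  intros v [a [Ha ->]]. auto.
Qed.

Lemma sug_approx {X} top (circ : ereal -> ereal -> ereal) (mu : (X -> Prop) -> ereal) D h x : (top = Fin 1 \/ top = PInf) ->
  elt x (sugeno top circ mu D h) ->
  exists a, inY top a /\ ele x (circ a (mu (fun x => D x /\ ele a (h x)))).
Proof.
  intros Htop H. unfold sugeno in H. apply esup_approx in H. 2: apply sug_ne; auto.
  destruct H as [v [[a [Ha ->]] Hv]]. eauto.
Qed.

Lemma sug_inY {X} (F : (X -> Prop) -> Prop) top (circ : ereal -> ereal -> ereal) mu D h :
  (top = Fin 1 \/ top = PInf) -> sigma_algebra F -> monotone_measure top F mu ->
  binop_on top circ -> F D -> measurable_fun top F h -> inY top (sugeno top circ mu D h).
Proof.
  intros Htop HF Hmu Hc HD Hh.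
  assert (Hv : forall a, inY top a -> inY top (circ a (mu (fun x => D x /\ ele a (h x))))).
  { intros a Ha. apply Hc; auto. apply (proj1 Hmu). apply F_inter; auto. apply (proj2 Hh); auto. }
  split.
  - apply ele_trans with (circ (Fin 0) (mu (fun x => D x /\ ele (Fin 0) (h x)))).
    apply Hv. apply inY_0; auto. apply sug_ub. apply inY_0; auto.
  - apply sug_least; auto. intros a Ha. apply Hv; auto.
Qed.

Lemma epow_rev x y t : 0 < t -> ele (Fin 0) x -> ele (Fin 0) y -> ele (epow x t) (epow y t) -> ele x y.
Proof.
  intros Ht Hx Hy H. destruct (ele_total x y) as [|Hyx]; auto.
  destruct (classic (x = y)) as [->|Hne]. apply ele_refl.
  exfalso. destruct x as [a|], y as [b|]; simpl in Hx, Hy, Hyx; try contradiction.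
  - rewrite !epow_Fin_pos in H by auto.
    destruct (Rle_dec a 0), (Rle_dec b 0); simpl in H; try lra.
    + apply Hne; f_equal; lra.
    + unfold Rpower in H. pose proof (exp_pos (t * ln a)); lra.
    + assert (Rpower b t < Rpower a t). apply Rlt_Rpower_l; auto.
      split; try lra. destruct Hyx; auto. subst; congruence. lra.
  - rewrite epow_PInf in H by auto. destruct (epow (Fin b) t) eqn:E; simpl in H; auto.
    rewrite epow_Fin_pos in E by auto. destruct (Rle_dec b 0); discriminate.
Qed.
Local Hint Resolve inY_top inY_0 epow_inY : core.

Lemma key (X : Type) (F : (X -> Prop) -> Prop) (top : ereal)
  (Htop : top = Fin 1 \/ top = PInf)
  (HF : sigma_algebra F)
  (mu : (X -> Prop) -> ereal) (Hmu : monotone_measure top F mu)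
  (circ box ocirc tri : ereal -> ereal -> ereal)
  (Hcirc : binop_on top circ) (Hbox : binop_on top box)
  (Hocirc : binop_on top ocirc) (Htri : binop_on top tri)
  (Hcirc_nd : nondecreasing_op top circ)
  (Hbox_nd : nondecreasing_op top box)
  (Hocirc_nd : nondecreasing_op top ocirc) (Hocirc_lc : left_continuous_op top ocirc)
  (H1 : forall a b t, inY top a -> inY top b -> 1 <= t ->
          ele (epow (circ a b) t) (circ (epow a t) b))
  (H2 : forall a b c d, inY top a -> inY top b -> inY top c -> inY top d ->
          ele (ocirc (circ a c) (circ b d)) (circ (box a b) (tri c d)))
  (p : R) (Hp : 1 <= p)
  (A B : X -> Prop) (HA : F A) (HB : F B)
  (f g : X -> ereal)
  (Hf : measurable_fun top F f) (Hg : measurable_fun top F g)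
  (Hfg : measurable_fun top F (fun x => epow (box (f x) (g x)) p))
  (Hdep : pos_dependent top mu tri f A g B) :
  ele (ocirc (sugeno top circ mu A f) (sugeno top circ mu B g))
      (epow (sugeno top circ mu (fun x => A x /\ B x)
                     (fun x => epow (box (f x) (g x)) p)) (/ p)).
Proof.
  unfold binop_on in Hcirc, Hbox, Hocirc, Htri.
  assert (Hp0 : 0 < p) by lra. assert (Hip : 0 < / p) by (apply Rinv_0_lt_compat; lra).
  destruct Hmu as [Hmu_in [Hmu0 [Hmupos Hmu_mono]]].
  assert (HAB : F (fun x => A x /\ B x)) by (apply F_inter; auto).
  assert (FA : forall a, inY top a -> F (fun x => A x /\ ele a (f x))).
  { intros a Ha. apply F_inter; auto. apply (proj2 Hf); auto. }
  assert (FB : forall a, inY top a -> F (fun x => B x /\ ele a (g x))).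
  { intros a Ha. apply F_inter; auto. apply (proj2 Hg); auto. }
  assert (FAB : forall a b, inY top a -> inY top b ->
     F (fun x => (A x /\ ele a (f x)) /\ (B x /\ ele b (g x)))).
  { intros a b Ha Hb. apply F_inter; auto. }
  assert (FC : forall c, inY top c ->
     F (fun x => (A x /\ B x) /\ ele c (epow (box (f x) (g x)) p))).
  { intros c Hc. apply F_inter; auto. apply (proj2 Hfg); auto. }
  set (T := sugeno top circ mu (fun x => A x /\ B x) (fun x => epow (box (f x) (g x)) p)).
  set (W := epow T (/ p)).
  set (XA := sugeno top circ mu A f). set (YB := sugeno top circ mu B g).
  assert (HT : inY top T) by (apply sug_inY with F; auto; split; auto).
  assert (HXA : inY top XA) by (apply sug_inY with F; auto; split; auto).
  assert (HYB : inY top YB) by (apply sug_inY with F; auto; split; auto).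
  assert (HW0 : ele (Fin 0) W) by (apply epow_ge0; auto).
  assert (Cgam : forall c, inY top c ->
    ele (circ c (mu (fun x => (A x /\ B x) /\ ele (epow c p) (epow (box (f x) (g x)) p)))) W).
  { intros c Hc.
    assert (Hcp : inY top (epow c p)) by (apply epow_inY; auto).
    set (m := mu (fun x => (A x /\ B x) /\ ele (epow c p) (epow (box (f x) (g x)) p))).
    assert (Hm : inY top m) by (apply Hmu_in; apply FC; auto).
    assert (E1 : ele (epow (circ c m) p) T).
    { apply ele_trans with (circ (epow c p) m). apply H1; auto.
      apply sug_ub; auto. }
    assert (Hcm : inY top (circ c m)) by (apply Hcirc; auto).
    replace (circ c m) with (epow (epow (circ c m) p) (/ p)).
    - apply epow_mono; auto. apply epow_ge0; auto.
    - rewrite epow_epow by auto. rewrite Rinv_r by lra. apply epow_1. apply Hcm. }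
  assert (L : forall al be a b, inY top al -> inY top be -> inY top a -> inY top b ->
     ele (ocirc (circ a (mu (fun x => A x /\ ele al (f x)))) (circ b (mu (fun x => B x /\ ele be (g x)))))
         (circ (box a b) (mu (fun x => (A x /\ ele al (f x)) /\ (B x /\ ele be (g x)))))).
  { intros al be a b Hal Hbe Ha Hb.
    eapply ele_trans. apply H2; auto.
    apply Hcirc_nd; [apply Hbox; auto | apply Hbox; auto | apply Hmu_in; apply FAB; auto | apply Htri; apply Hmu_in; auto | apply ele_refl | apply Hdep; auto]. }
  assert (M : forall al be, inY top al -> inY top be ->
     ele (ocirc (circ al (mu (fun x => A x /\ ele al (f x)))) (circ be (mu (fun x => B x /\ ele be (g x))))) W).
  { intros al be Hal Hbe. eapply ele_trans. apply L; auto.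
    assert (Hb : inY top (box al be)) by (apply Hbox; auto).
    eapply ele_trans. 2: apply (Cgam (box al be) Hb).
    apply Hcirc_nd; [auto|auto| apply Hmu_in; apply FC; apply epow_inY; auto | apply Hmu_in; apply FAB; auto | apply ele_refl | ].
    apply Hmu_mono; auto. intros x [[Ha Hfx] [Hb' Hgx]]. split; auto.
    apply epow_mono; auto. apply Hb. apply Hbox_nd; auto; [apply Hf | apply Hg]. }
  destruct (classic (XA = Fin 0)) as [EX|NX].
  { apply ele_trans with (Fin 0); auto.
    apply ele_trans with (ocirc (circ top (mu (fun x => A x /\ ele top (f x))))
                                (circ top (mu (fun x => B x /\ ele (Fin 0) (g x))))).
    { apply Hocirc_nd; auto 8.
      - rewrite EX. apply Hcirc; auto 8.
      - apply sug_least; auto. intros a Ha. apply Hcirc_nd; auto 8.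
        apply Ha.
        apply Hmu_mono; auto 8.
        intros x [Hx1 Hx2]; split; auto. apply Hg. }
    eapply ele_trans. apply L; auto 8.
    apply ele_trans with XA; [| rewrite EX; apply ele_refl].
    eapply ele_trans. 2: apply (sug_ub top circ mu A f top); auto.
    apply Hcirc_nd; auto 8.
    apply Hbox; auto.
    apply Hmu_mono; auto 8. tauto. }
  destruct (classic (YB = Fin 0)) as [EY|NY].
  { apply ele_trans with (Fin 0); auto.
    apply ele_trans with (ocirc (circ top (mu (fun x => A x /\ ele (Fin 0) (f x))))
                                (circ top (mu (fun x => B x /\ ele top (g x))))).
    { apply Hocirc_nd; auto 8.
      - apply sug_least; auto. intros a Ha. apply Hcirc_nd; auto 8.
        apply Ha.
        apply Hmu_mono; auto 8.
        intros x [Hx1 Hx2]; split; auto. apply Hf.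
      - rewrite EY. apply Hcirc; auto 8. }
    eapply ele_trans. apply L; auto 8.
    apply ele_trans with YB; [| rewrite EY; apply ele_refl].
    eapply ele_trans. 2: apply (sug_ub top circ mu B g top); auto.
    apply Hcirc_nd; auto 8.
    apply Hbox; auto.
    apply Hmu_mono; auto 8. tauto. }
  assert (PX : elt (Fin 0) XA) by (split; [apply HXA | congruence]).
  assert (PY : elt (Fin 0) YB) by (split; [apply HYB | congruence]).
  destruct (approx_seq top XA Htop HXA PX) as [u [Hu Hu2]].
  destruct (approx_seq top YB Htop HYB PY) as [v [Hv Hv2]].
  apply ecv_le with (fun n => ocirc (u n) (v n)).
  - apply Hocirc_lc; auto.
  - intro n.
    destruct (sug_approx top circ mu A f (u n) Htop (Hu2 n)) as [al [Hal Hal2]].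
    destruct (sug_approx top circ mu B g (v n) Htop (Hv2 n)) as [be [Hbe Hbe2]].
    eapply ele_trans. 2: apply (M al be); auto.
    apply Hocirc_nd; auto; try apply Hcirc; auto; try apply Hmu_in; auto.
    apply (proj1 Hu). apply (proj1 Hv).
Qed.
Theorem mainTheorem1 (X : Type) (F : (X -> Prop) -> Prop) (top : ereal)
  (Htop : top = Fin 1 \/ top = PInf)
  (HF : sigma_algebra F)
  (mu : (X -> Prop) -> ereal) (Hmu : monotone_measure top F mu)
  (circ star box ocirc tri : ereal -> ereal -> ereal)
  (Hcirc : binop_on top circ) (Hstar : binop_on top star) (Hbox : binop_on top box)
  (Hocirc : binop_on top ocirc) (Htri : binop_on top tri)
  (Hcirc_nd : nondecreasing_op top circ) (Hstar_nd : nondecreasing_op top star)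
  (Hbox_nd : nondecreasing_op top box)
  (Hocirc_nd : nondecreasing_op top ocirc) (Hocirc_lc : left_continuous_op top ocirc)
  (H1 : forall a b t, inY top a -> inY top b -> 1 <= t ->
          ele (epow (circ a b) t) (circ (epow a t) b))
  (H2 : forall a b c d, inY top a -> inY top b -> inY top c -> inY top d ->
          ele (ocirc (circ a c) (circ b d)) (circ (box a b) (tri c d)))
  (p q r s : R) (Hp : 1 <= p) (Hq : 1 <= q) (Hr : 0 < r) (Hs : 0 < s)
  (A B : X -> Prop) (HA : F A) (HB : F B)
  (f g h : X -> ereal)
  (Hf : measurable_fun top F f) (Hg : measurable_fun top F g) (Hh : measurable_fun top F h)
  (Hfg : measurable_fun top F (fun x => epow (box (f x) (g x)) p))
  (Hfh : measurable_fun top F (fun x => epow (box (f x) (h x)) q))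
  (Hdep1 : pos_dependent top mu tri f A g B)
  (Hdep2 : pos_dependent top mu tri f A h B) :
  ele (star (epow (ocirc (sugeno top circ mu A f) (sugeno top circ mu B g)) r)
            (epow (ocirc (sugeno top circ mu A f) (sugeno top circ mu B h)) s))
      (star (epow (sugeno top circ mu (fun x => A x /\ B x)
                     (fun x => epow (box (f x) (g x)) p)) (r / p))
            (epow (sugeno top circ mu (fun x => A x /\ B x)
                     (fun x => epow (box (f x) (h x)) q)) (s / q))).
Proof.
  pose proof (key X F top Htop HF mu Hmu circ box ocirc tri Hcirc Hbox Hocirc Htri Hcirc_nd Hbox_nd
    Hocirc_nd Hocirc_lc H1 H2 p Hp A B HA HB f g Hf Hg Hfg Hdep1) as K1.
  pose proof (key X F top Htop HF mu Hmu circ box ocirc tri Hcirc Hbox Hocirc Htri Hcirc_nd Hbox_nd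
    Hocirc_nd Hocirc_lc H1 H2 q Hq A B HA HB f h Hf Hh Hfh Hdep2) as K2.
  assert (HAB : F (fun x => A x /\ B x)) by (apply F_inter; auto).
  assert (IA : inY top (sugeno top circ mu A f)) by (apply sug_inY with F; auto).
  assert (IB : inY top (sugeno top circ mu B g)) by (apply sug_inY with F; auto).
  assert (IC : inY top (sugeno top circ mu B h)) by (apply sug_inY with F; auto).
  assert (I1 : inY top (sugeno top circ mu (fun x => A x /\ B x) (fun x => epow (box (f x) (g x)) p)))
    by (apply sug_inY with F; auto).
  assert (I2 : inY top (sugeno top circ mu (fun x => A x /\ B x) (fun x => epow (box (f x) (h x)) q)))
    by (apply sug_inY with F; auto).
  assert (Hp0 : 0 < p) by lra. assert (Hq0 : 0 < q) by lra.
  assert (Hip : 0 < / p) by (apply Rinv_0_lt_compat; lra).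
  assert (Hiq : 0 < / q) by (apply Rinv_0_lt_compat; lra).
  assert (O1 : inY top (ocirc (sugeno top circ mu A f) (sugeno top circ mu B g))) by (apply Hocirc; auto).
  assert (O2 : inY top (ocirc (sugeno top circ mu A f) (sugeno top circ mu B h))) by (apply Hocirc; auto).
  apply Hstar_nd.
  - apply epow_inY; auto. unfold Rdiv; apply Rmult_lt_0_compat; auto.
  - apply epow_inY; auto.
  - apply epow_inY; auto. unfold Rdiv; apply Rmult_lt_0_compat; auto.
  - apply epow_inY; auto.
  - replace (r / p) with (/ p * r) by (field; lra). rewrite <- epow_epow by auto.
    apply epow_mono; auto. apply O1.
  - replace (s / q) with (/ q * s) by (field; lra). rewrite <- epow_epow by auto.
    apply epow_mono; auto. apply O2.
Qed.
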